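(* Let $a,b,d>0$, let $c_-$ be the unique negative zero of $Q(x)=4ax^3-b^2x^2-18abd\,x+27a^2d^2+4db^3$, let $c^*=-\sqrt{3bd}$, and assume $c\in(c_-,c^* )$. Let $\phi(x)=\frac{ax^3+bx^2+cx+d}{x^3}$ ($x>0$), $x_m=\frac{-c-\sqrt{c^2-3bd}}{b}$, $x_M=\frac{-c+\sqrt{c^2-3bd}}{b}$. Assume $\phi$ has a unique equilibrium $\overline{t}$ with $\overline{t}<x_m$, and let $\{t_n\}_{n\ge0}$ be a positive solution of $t_{n+1}=\phi(t_n)$. Let $c_1^*=-2\sqrt{bd}$; when $c>c_1^*$ let $\eta=\frac{-dx_m}{cx_m+2d}$ (the unique $\eta>x_M$ with $\phi(\eta)=\phi(x_m)$). Let $I=[\phi(x_m),\phi^2(x_m)]$. \begin{description} \item[(a)] Under the hypothesis (H): ''either $c\leq c_1^*$, or $c>c_1^*$ and $\phi^2(x_m)\leq\eta$'', the interval $I$ is invariant, i.e. $\phi(I)\subseteq I$. Moreover, if $c\leq c_1^*$ then every positive solution eventually enters $I$ (and stays there). \item[(b)] If $\phi$ has no 2-cycle, then $\{t_n\}$ converges to $\overline{t}$. \item[(c)] Assume $\phi$ has exactly one 2-cycle $(p,q)$ with $p<\overline{t}<q\leq x_m$. Let $\mathcal{S}=\bigcup_{n\ge0}\phi^{-n}(\overline{t})=\{t>0:\phi^n(t)=\overline{t}\text{ for some }n\ge0\}$. If $\overline{t}<-dx_M/(cx_M+2d)$ then $\mathcal{S}=\{\overline{t}\}$. Also, if $t_0\notin\mathcal{S}$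 then $\{t_n\}$ converges to the 2-cycle $(p,q)$; otherwise it converges to $\overline{t}$. \end{description}
   Context: $x_m<x_M$ are the local minimum and local maximum points of $\phi$; $\phi^n$ denotes the $n$-th iterate. An equilibrium is $t>0$ with $\phi(t)=t$. A 2-cycle is a pair $(p,q)$ of positive numbers with $p\ne q$, $\phi(p)=q$, $\phi(q)=p$. A positive solution is a sequence with $t_0>0$ and $t_{n+1}=\phi(t_n)$. The sequence $\{t_n\}$ converges to the 2-cycle $(p,q)$ if one of the subsequences $\{t_{2n}\}$, $\{t_{2n+1}\}$ converges to $p$ and the other to $q$. *)

(* Defs.v *)
From Stdlib Require Import Reals Lra.
Open Scope R_scope.

Definition phi (a b c d x : R) : R := (a * x ^ 3 + b * x ^ 2 + c * x + d) / x ^ 3.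

Definition Qpoly (a b d x : R) : R :=
  4 * a * x ^ 3 - b ^ 2 * x ^ 2 - 18 * a * b * d * x + 27 * a ^ 2 * d ^ 2 + 4 * d * b ^ 3.

(* x_m and x_M, the local minimum / maximum points of phi *)
Definition x_m (b c d : R) : R := (- c - sqrt (c ^ 2 - 3 * b * d)) / b.
Definition x_M (b c d : R) : R := (- c + sqrt (c ^ 2 - 3 * b * d)) / b.

Definition iter (n : nat) (f : R -> R) (x : R) : R := Nat.iter n f x.

Definition is_equilibrium (f : R -> R) (t : R) : Prop := 0 < t /\ f t = t.

Definition is_2cycle (f : R -> R) (p q : R) : Prop :=
  0 < p /\ 0 < q /\ p <> q /\ f p = q /\ f q = p.

Definition positive_solution (f : R -> R) (t : nat -> R) : Prop :=
  0 < t O /\ forall n, t (S n) = f (t n).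

Definition converges_to_2cycle (t : nat -> R) (p q : R) : Prop :=
  (Un_cv (fun n => t (2 * n)%nat) p /\ Un_cv (fun n => t (2 * n + 1)%nat) q) \/
  (Un_cv (fun n => t (2 * n)%nat) q /\ Un_cv (fun n => t (2 * n + 1)%nat) p).

Definition in_preimage_set (f : R -> R) (tbar t : R) : Prop :=
  0 < t /\ exists n : nat, iter n f t = tbar.

(* Main.v *)
Require Import Defs.
From Stdlib Require Import Reals Lra Lia Nsatz Ranalysis5 Classical.
From Coquelicot Require Coquelicot.
Open Scope R_scope.

Module D.
Import Coquelicot.Coquelicot.
Ltac nz := apply Rgt_not_eq; repeat apply Rmult_lt_0_compat; lra.
Definition f1 b c d x := - b / x ^ 2 - 2 * c / x ^ 3 - 3 * d / x ^ 4.
Definition f2 b c d x := 2 * b / x ^ 3 + 6 * c / x ^ 4 + 12 * d / x ^ 5.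
Definition f3 b c d x := - 6 * b / x ^ 4 - 24 * c / x ^ 5 - 60 * d / x ^ 6.
Lemma d_f : forall a b c d x, 0 < x -> derivable_pt_lim (phi a b c d) x (f1 b c d x).
Proof. intros. apply is_derive_Reals. unfold phi, f1. auto_derive. nz. field. lra. Qed.
Lemma d_f1 : forall b c d x, 0 < x -> derivable_pt_lim (f1 b c d) x (f2 b c d x).
Proof. intros. apply is_derive_Reals. unfold f2, f1. auto_derive. repeat split; nz. field. lra. Qed.
Lemma d_f2 : forall b c d x, 0 < x -> derivable_pt_lim (f2 b c d) x (f3 b c d x).
Proof. intros. apply is_derive_Reals. unfold f2, f3. auto_derive. repeat split; nz. field. lra. Qed.
End D.

Lemma dl_eq : forall F x l l', derivable_pt_lim F x l -> l = l' -> derivable_pt_lim F x l'.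
Proof. intros; subst; auto. Qed.
Lemma dl_comp : forall F G x l1 l2, derivable_pt_lim G x l1 -> derivable_pt_lim F (G x) l2 ->
  derivable_pt_lim (fun y => F (G y)) x (l2 * l1).
Proof. intros. apply (derivable_pt_lim_comp G F x l1 l2); auto. Qed.
Lemma dl_mult : forall F G x l1 l2, derivable_pt_lim F x l1 -> derivable_pt_lim G x l2 ->
  derivable_pt_lim (fun y => F y * G y) x (l1 * G x + F x * l2).
Proof. intros. apply (derivable_pt_lim_mult F G x l1 l2); auto. Qed.
Lemma dl_plus : forall F G x l1 l2, derivable_pt_lim F x l1 -> derivable_pt_lim G x l2 ->
  derivable_pt_lim (fun y => F y + G y) x (l1 + l2).
Proof. intros. apply (derivable_pt_lim_plus F G x l1 l2); auto. Qed.
Lemma dl_minus_id : forall F x l, derivable_pt_lim F x l ->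
  derivable_pt_lim (fun y => F y - y) x (l - 1).
Proof. intros. apply (derivable_pt_lim_minus F id x l 1); auto. apply derivable_pt_lim_id. Qed.

Section Alg.
Variables a b c d : R.
Hypothesis ha : 0 < a.
Hypothesis hb : 0 < b.
Hypothesis hd : 0 < d.
Hypothesis hc0 : c < 0.
Hypothesis hc3 : 3 * b * d < c ^ 2.

Definition sq := sqrt (c ^ 2 - 3 * b * d).
Definition P (u : R) := a + b * u + c * u ^ 2 + d * u ^ 3.
Definition vm := (- c + sq) / (3 * d).
Definition vM := (- c - sq) / (3 * d).

Lemma sq_pos : 0 < sq.
Proof. unfold sq. apply sqrt_lt_R0. lra. Qed.
Lemma sq_sq : sq * sq = c ^ 2 - 3 * b * d.
Proof. unfold sq. apply sqrt_sqrt. lra. Qed.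
Lemma sq_lt : sq < - c.
Proof.
  pose proof sq_pos. pose proof sq_sq.
  assert (sq * sq < c * c) by nra. nra.
Qed.

Lemma xm_eq : x_m b c d = (- c - sq) / b.
Proof. reflexivity. Qed.
Lemma xM_eq : x_M b c d = (- c + sq) / b.
Proof. reflexivity. Qed.

Lemma xm_pos : 0 < x_m b c d.
Proof. rewrite xm_eq. pose proof sq_lt. apply Rdiv_lt_0_compat; lra. Qed.
Lemma xm_lt_xM : x_m b c d < x_M b c d.
Proof.
  rewrite xm_eq, xM_eq. pose proof sq_pos. unfold Rdiv.
  apply Rmult_lt_compat_r. apply Rinv_0_lt_compat; lra. lra.
Qed.
Lemma xM_pos : 0 < x_M b c d.
Proof. pose proof xm_pos; pose proof xm_lt_xM; lra. Qed.

Lemma inv_xm : / x_m b c d = vm.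
Proof.
  rewrite xm_eq. unfold vm. pose proof sq_sq. pose proof sq_lt.
  field_simplify_eq; try lra; try nra.
Qed.
Lemma inv_xM : / x_M b c d = vM.
Proof.
  rewrite xM_eq. unfold vM. pose proof sq_sq. pose proof sq_lt. pose proof sq_pos.
  field_simplify_eq; try lra; try nra.
Qed.

Lemma vM_pos : 0 < vM.
Proof. unfold vM. pose proof sq_lt. apply Rdiv_lt_0_compat; lra. Qed.
Lemma vM_lt_vm : vM < vm.
Proof. unfold vM, vm. pose proof sq_pos. unfold Rdiv.
  apply Rmult_lt_compat_r. apply Rinv_0_lt_compat; lra. lra. Qed.

Lemma phi_P : forall x, x <> 0 -> phi a b c d x = P (/ x).
Proof. intros x hx. unfold phi, P. field. auto. Qed.

Definition Dq u v := b + c * (u + v) + d * (u ^ 2 + u * v + v ^ 2).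
Lemma P_diff : forall u v, P u - P v = (u - v) * Dq u v.
Proof. intros. unfold P, Dq. ring. Qed.

Lemma Dq_vm : forall A B, Dq (vm + A) (vm + B) = sq * (A + B) + d * (A ^ 2 + A * B + B ^ 2).
Proof.
  intros. unfold Dq.
  assert (E1 : b + 2 * c * vm + 3 * d * vm ^ 2 = 0).
  { unfold vm. pose proof sq_sq. field_simplify_eq; [|lra]. nra. }
  assert (E2 : c + 3 * d * vm = sq). { unfold vm. field. lra. }
  transitivity ((b + 2 * c * vm + 3 * d * vm ^ 2) + (c + 3 * d * vm) * (A + B)
     + d * (A ^ 2 + A * B + B ^ 2)); [ring|]. rewrite E1, E2. ring.
Qed.
Lemma Dq_vM : forall A B, Dq (vM + A) (vM + B) = - sq * (A + B) + d * (A ^ 2 + A * B + B ^ 2).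
Proof.
  intros. unfold Dq.
  assert (E1 : b + 2 * c * vM + 3 * d * vM ^ 2 = 0).
  { unfold vM. pose proof sq_sq. field_simplify_eq; [|lra]. nra. }
  assert (E2 : c + 3 * d * vM = - sq). { unfold vM. field. lra. }
  transitivity ((b + 2 * c * vM + 3 * d * vM ^ 2) + (c + 3 * d * vM) * (A + B)
     + d * (A ^ 2 + A * B + B ^ 2)); [ring|]. rewrite E1, E2. ring.
Qed.

Lemma P_incR : forall u v, vm <= v -> v < u -> P v < P u.
Proof.
  intros u v h1 h2. pose proof sq_pos.
  assert (Dq u v > 0).
  { replace u with (vm + (u - vm)) by ring. replace v with (vm + (v - vm)) by ring.
    rewrite Dq_vm. set (A := u - vm). set (B := v - vm).
    assert (0 <= B) by (unfold B; lra). assert (B < A) by (unfold A, B; lra).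
    assert (0 <= A ^ 2 + A * B + B ^ 2) by nra. nra. }
  pose proof (P_diff u v). nra.
Qed.
Lemma P_incL : forall u v, v < u -> u <= vM -> P v < P u.
Proof.
  intros u v h1 h2. pose proof sq_pos.
  assert (Dq u v > 0).
  { replace u with (vM + (u - vM)) by ring. replace v with (vM + (v - vM)) by ring.
    rewrite Dq_vM. set (A := u - vM). set (B := v - vM).
    assert (A <= 0) by (unfold A; lra). assert (B < A) by (unfold A, B; lra).
    assert (0 <= A ^ 2 + A * B + B ^ 2) by nra. nra. }
  pose proof (P_diff u v). nra.
Qed.
Lemma P_decM : forall u v, vM <= v -> v < u -> u <= vm -> P u < P v.
Proof.
  intros u v h1 h2 h3. pose proof sq_pos.
  assert (Dq u v < 0).
  { replace u with (vm + (u - vm)) by ring. replace v with (vm + (v - vm)) by ring.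
    rewrite Dq_vm. set (A := vm - u). set (B := vm - v).
    replace (u - vm) with (- A) by (unfold A; ring).
    replace (v - vm) with (- B) by (unfold B; ring).
    assert (K : vm - vM = 2 * sq / (3 * d)) by (unfold vm, vM; field; lra).
    set (k := vm - vM) in *.
    assert (0 <= A) by (unfold A; lra). assert (A < B) by (unfold A, B; lra).
    assert (B <= k) by (unfold B, k; lra).
    assert (Hk : 3 * d * k = 2 * sq) by (rewrite K; field; lra).
    assert (A ^ 2 + A * B + B ^ 2 < 3 / 2 * k * (A + B)) by nra.
    nra. }
  pose proof (P_diff u v). nra.
Qed.

Hypothesis hQ : 0 < Qpoly a b d c.

Local Notation f := (phi a b c d).
Local Notation xm := (x_m b c d).
Local Notation xM := (x_M b c d).

Lemma f_P : forall x, 0 < x -> f x = P (/ x).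
Proof. intros. apply phi_P. lra. Qed.

Lemma inv_lt : forall x y, 0 < x -> x < y -> / y < / x.
Proof. intros. apply Rinv_lt_contravar; nra. Qed.
Lemma inv_le : forall x y, 0 < x -> x <= y -> / y <= / x.
Proof. intros. apply Rinv_le_contravar; lra. Qed.

Lemma f_dec1 : forall x y, 0 < x -> x < y -> y <= xm -> f y < f x.
Proof.
  intros x y h0 h1 h2. rewrite !f_P by lra. apply P_incR.
  rewrite <- inv_xm. apply inv_le; lra. apply inv_lt; lra.
Qed.
Lemma f_inc : forall x y, xm <= x -> x < y -> y <= xM -> f x < f y.
Proof.
  intros x y h0 h1 h2. pose proof xm_pos. rewrite !f_P by lra. apply P_decM.
  rewrite <- inv_xM. apply inv_le; lra. apply inv_lt; lra.
  rewrite <- inv_xm. apply inv_le; lra.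
Qed.
Lemma f_dec2 : forall x y, xM <= x -> x < y -> f y < f x.
Proof.
  intros x y h0 h1. pose proof xM_pos. rewrite !f_P by lra. apply P_incL.
  apply inv_lt; lra. rewrite <- inv_xM. apply inv_le; lra.
Qed.

Lemma f_dec1' : forall x y, 0 < x -> x <= y -> y <= xm -> f y <= f x.
Proof. intros. destruct (Req_dec x y). subst; lra. left; apply f_dec1; lra. Qed.
Lemma f_inc' : forall x y, xm <= x -> x <= y -> y <= xM -> f x <= f y.
Proof. intros. destruct (Req_dec x y). subst; lra. left; apply f_inc; lra. Qed.
Lemma f_dec2' : forall x y, xM <= x -> x <= y -> f y <= f x.
Proof. intros. destruct (Req_dec x y). subst; lra. left; apply f_dec2; lra. Qed.

Lemma disc_id : 27 * d ^ 2 * P vm * P vM = Qpoly a b d c.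
Proof.
  unfold P, vm, vM, Qpoly. pose proof sq_sq.
  assert (b = (c^2 - sq*sq)/(3*d)) by (field_simplify_eq; lra).
  rewrite H0. field. lra.
Qed.

Lemma P0 : P 0 = a.
Proof. unfold P; ring. Qed.

Lemma fxM_gt_a : a < f xM.
Proof. rewrite f_P by apply xM_pos. rewrite inv_xM, <- P0. apply P_incL. apply vM_pos. lra. Qed.

Lemma m0_pos : 0 < f xm.
Proof.
  pose proof disc_id. pose proof fxM_gt_a. rewrite f_P in * by (apply xM_pos || apply xm_pos).
  rewrite inv_xM in *. rewrite inv_xm.
  assert (0 < P vm * P vM).
  { assert (0 < 27 * d ^ 2) by nra. nra. }
  nra.
Qed.

Lemma f_ge_m0_le_xM : forall x, 0 < x -> x <= xM -> f xm <= f x.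
Proof.
  intros. pose proof xm_lt_xM. destruct (Rle_dec x xm).
  apply f_dec1'; lra. apply f_inc'; lra.
Qed.

Lemma f_lb : forall x, 0 < x -> Rmin a (f xm) <= f x.
Proof.
  intros. pose proof xm_lt_xM. destruct (Rle_dec x xM).
  - pose proof (f_ge_m0_le_xM x H r). pose proof (Rmin_r a (f xm)). lra.
  - assert (a < f x).
    { rewrite f_P by lra. rewrite <- P0. apply P_incL. apply Rinv_0_lt_compat; lra.
      rewrite <- inv_xM. apply inv_le. apply xM_pos. lra. }
    pose proof (Rmin_l a (f xm)). lra.
Qed.

Lemma kappa_pos : 0 < Rmin a (f xm).
Proof. pose proof m0_pos. unfold Rmin. destruct (Rle_dec a (f xm)); lra. Qed.

Lemma f_pos : forall x, 0 < x -> 0 < f x.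
Proof. intros. pose proof (f_lb x H). pose proof kappa_pos. lra. Qed.

Lemma f_le_fxM : forall x, xm <= x -> f x <= f xM.
Proof.
  intros. pose proof xm_lt_xM. destruct (Rle_dec x xM).
  apply f_inc'; lra. apply f_dec2'; lra.
Qed.

Lemma MinL : forall y Y, 0 < y -> y <= Y ->
  Rmin (f Y) (f xm) <= f y /\ (Y <= xm -> f Y <= f y).
Proof.
  intros y Y h0 h1. pose proof xm_lt_xM.
  pose proof (Rmin_l (f Y) (f xm)). pose proof (Rmin_r (f Y) (f xm)).
  split.
  - destruct (Rle_dec y xM).
    + pose proof (f_ge_m0_le_xM y h0 r). lra.
    + pose proof (f_dec2' y Y). lra.
  - intros. apply f_dec1'; lra.
Qed.

Lemma f_cont : forall x, 0 < x -> continuity_pt f x.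
Proof. intros. unfold phi. reg. apply pow_nonzero. lra. Qed.

Lemma P_vm_fact : forall u, P u - P vm = (u - vm) ^ 2 * (sq + d * (u - vm)).
Proof.
  intros. rewrite P_diff. pose proof (Dq_vm (u - vm) 0) as E.
  replace (vm + (u - vm)) with u in E by ring. replace (vm + 0) with vm in E by ring.
  rewrite E. ring.
Qed.
Lemma P_vM_fact : forall u, P u - P vM = (u - vM) ^ 2 * (- sq + d * (u - vM)).
Proof.
  intros. rewrite P_diff. pose proof (Dq_vM (u - vM) 0) as E.
  replace (vM + (u - vM)) with u in E by ring. replace (vM + 0) with vM in E by ring.
  rewrite E. ring.
Qed.

Variable tbar : R.
Hypothesis htb : 0 < tbar.
Hypothesis hfix : f tbar = tbar.
Hypothesis huniq : forall t, 0 < t -> f t = t -> t = tbar.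
Hypothesis htm : tbar < xm.

Local Notation g := (fun x => f (f x)).

Lemma P1 : forall x, 0 < x -> x < tbar -> tbar < f x.
Proof. intros. rewrite <- hfix at 1. apply f_dec1; lra. Qed.
Lemma P1' : forall x, tbar < x -> x <= xm -> f x < tbar.
Proof. intros. rewrite <- hfix. apply f_dec1; lra. Qed.
Lemma m0_lt_tbar : f xm < tbar.
Proof. apply P1'; lra. Qed.

Lemma f_le_abd : forall X, 1 <= X -> f X <= a + b + d.
Proof.
  intros. rewrite f_P by lra. unfold P.
  assert (0 < / X <= 1).
  { split. apply Rinv_0_lt_compat; lra. rewrite <- Rinv_1. apply inv_le; lra. }
  set (u := / X) in *. assert (0 <= u^2) by nra. assert (u^3 <= 1) by nra.
  assert (c * u ^ 2 <= 0) by nra. nra.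
Qed.

Lemma cont_id_minus : forall F x, continuity_pt F x -> continuity_pt (fun y => y - F y) x.
Proof.
  intros. change (continuity_pt (minus_fct id F) x). apply continuity_pt_minus.
  apply derivable_continuous_pt, derivable_pt_id. auto.
Qed.
Lemma cont_minus_c : forall F k x, continuity_pt F x -> continuity_pt (fun y => k - F y) x.
Proof.
  intros. change (continuity_pt (minus_fct (fct_cte k) F) x). apply continuity_pt_minus.
  apply derivable_continuous_pt, derivable_pt_const. auto.
Qed.

Lemma g_cont : forall x, 0 < x -> continuity_pt g x.
Proof.
  intros. apply (continuity_pt_comp f f x). apply f_cont; auto. apply f_cont. apply f_pos; auto.
Qed.

Lemma P2 : forall x, tbar < x -> f x < x.
Proof.
  intros x hx. destruct (Rlt_dec (f x) x) as [|hn]; auto. exfalso.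
  destruct (Req_dec (f x) x) as [E|E]. { pose proof (huniq x). lra. }
  set (X := x + a + b + d + 1).
  assert (f X <= a + b + d) by (apply f_le_abd; unfold X; lra).
  destruct (IVT_interv (fun y => y - f y) x X) as [z [hz1 hz2]].
  - intros. apply cont_id_minus. apply f_cont. lra.
  - unfold X; lra.
  - lra.
  - unfold X in *; lra.
  - assert (f z = z) by lra. pose proof (huniq z). lra.
Qed.
Lemma P2' : forall x, 0 < x -> x < tbar -> x < f x.
Proof. intros. pose proof (P1 x H H0). lra. Qed.

Lemma g_fix_cycle : forall x, 0 < x -> g x = x -> x <> tbar -> is_2cycle f x (f x).
Proof.
  intros x h0 h1 h2. unfold is_2cycle. pose proof (f_pos x h0).
  refine (conj h0 (conj H (conj _ (conj eq_refl h1)))).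
  intro E. apply h2. apply huniq; auto.
Qed.

Lemma SignG : forall z, (forall y, 0 < y -> y < z -> g y <> y) ->
  forall y, 0 < y -> y < z -> y < g y.
Proof.
  intros z hz y0 h0 h1. destruct (Rlt_dec y0 (g y0)) as [|hn]; auto. exfalso.
  assert (g y0 < y0). { pose proof (hz y0 h0 h1). lra. }
  pose proof kappa_pos as hk. set (k := Rmin a (f xm)) in *.
  set (y1 := Rmin y0 k / 2).
  assert (hy1 : 0 < y1 /\ y1 < y0 /\ y1 < k).
  { unfold y1, Rmin. destruct (Rle_dec y0 k); lra. }
  assert (k <= g y1). { apply f_lb. apply f_pos. lra. }
  destruct (IVT_interv (fun y => y - g y) y1 y0) as [w [hw1 hw2]].
  - intros. apply cont_id_minus. apply g_cont. lra.
  - lra.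
  - lra.
  - lra.
  - apply (hz w). lra. lra. lra.
Qed.

Lemma LemM : forall z0 x, 0 < z0 -> z0 <= tbar ->
  (forall y, 0 < y -> y < z0 -> y < g y) ->
  0 < x -> x < z0 -> xm <= f x ->
  (forall y, z0 <= y -> y < tbar -> f y = xm -> x < f xm) -> x < f xm.
Proof.
  intros z0 x h0 h1 hg hx0 hx1 hx2 hM.
  destruct (Req_dec (f x) xm) as [E|E].
  { rewrite <- E. apply hg; lra. }
  destruct (IVT_interv (fun y => xm - f y) x tbar) as [z [hz1 hz2]].
  - intros. apply cont_minus_c. apply f_cont. lra.
  - lra.
  - lra.
  - lra.
  - assert (f z = xm) by lra.
    assert (z <> tbar) by (intro; subst; lra).
    destruct (Rlt_dec z z0).
    + rewrite <- H. assert (z < g z) by (apply hg; lra). lra.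
    + apply (hM z); lra.
Qed.

Lemma Inv : forall z0, 0 < z0 -> z0 <= tbar ->
  (forall y, 0 < y -> y < z0 -> y < g y) ->
  (forall x, 0 < x -> x < z0 -> xm <= f x -> x < f xm) ->
  forall x y, 0 < x -> x < z0 -> x <= y -> y <= f x -> x <= f y <= f x.
Proof.
  intros z0 h0 h1 hg hM x y hx0 hx1 hy1 hy2.
  destruct (Rle_dec y tbar).
  - split.
    + assert (f tbar <= f y) by (apply f_dec1'; lra). lra.
    + apply f_dec1'; lra.
  - split.
    + destruct (MinL y (f x)) as [m1 m2]; try lra.
      destruct (Rle_dec (f x) xm).
      * specialize (m2 r). assert (x < g x) by (apply hg; lra). lra.
      * assert (x < f xm) by (apply hM; lra).
        assert (x < g x) by (apply hg; lra).
        unfold Rmin in m1. destruct (Rle_dec (f (f x)) (f xm)); lra.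
    + pose proof (P2 y). lra.
Qed.

Lemma cv_le : forall u l B, Un_cv u l -> (forall n, u n <= B) -> l <= B.
Proof.
  intros u l B hu hB. destruct (Rle_dec l B) as [|hn]; auto. exfalso.
  destruct (hu (l - B)) as [N hN]. lra.
  specialize (hN N (le_n N)). specialize (hB N). unfold Rdist in hN.
  unfold Rabs in hN. destruct (Rcase_abs (u N - l)); lra.
Qed.
Lemma cv_ge : forall u l B, Un_cv u l -> (forall n, B <= u n) -> B <= l.
Proof.
  intros u l B hu hB. destruct (Rle_dec B l) as [|hn]; auto. exfalso.
  destruct (hu (B - l)) as [N hN]. lra.
  specialize (hN N (le_n N)). specialize (hB N). unfold Rdist in hN.
  unfold Rabs in hN. destruct (Rcase_abs (u N - l)); lra.
Qed.

Lemma dec_conv : forall u B, (forall n, u (S n) <= u n) -> (forall n, B <= u n) ->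
  exists l, Un_cv u l /\ B <= l.
Proof.
  intros u B h1 h2. destruct (decreasing_cv u) as [l hl].
  - exact h1.
  - exists (- B). intros x [i hi]. unfold opp_seq in hi. specialize (h2 i). lra.
  - exists l. split; auto. apply (cv_ge u l B hl h2).
Qed.
Lemma inc_conv : forall u B, (forall n, u n <= u (S n)) -> (forall n, u n <= B) ->
  exists l, Un_cv u l /\ l <= B /\ forall n, u n <= l.
Proof.
  intros u B h1 h2. destruct (growing_cv u) as [l hl].
  - exact h1.
  - exists B. intros x [i hi]. specialize (h2 i). lra.
  - exists l. split; auto. split. apply (cv_le u l B hl h2).
    intros n. apply (cv_ge (fun k => u (k + n)%nat) l (u n)).
    apply CV_shift'. auto.
    intros k. induction k. simpl. lra. simpl. specialize (h1 (k + n)%nat). lra.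
Qed.

Lemma cv_fix : forall (F : R -> R) u l, Un_cv u l -> (forall n, u (S n) = F (u n)) ->
  continuity_pt F l -> F l = l.
Proof.
  intros F u l hu hs hc. apply (UL_sequence (fun n => u (n + 1)%nat)).
  - apply (Un_cv_ext (fun i => F (u i))). intros. rewrite Nat.add_1_r. auto.
    apply continuity_seq; auto.
  - apply CV_shift'. auto.
Qed.

Lemma cv_squeeze : forall u v w l, Un_cv u l -> Un_cv w l ->
  (forall n, u n <= v n <= w n) -> Un_cv v l.
Proof.
  intros u v w l hu hw hB e he. destruct (hu e he) as [N1 h1]. destruct (hw e he) as [N2 h2].
  exists (max N1 N2). intros n hn. specialize (h1 n ltac:(lia)). specialize (h2 n ltac:(lia)).
  specialize (hB n). unfold Rdist in *. unfold Rabs in *.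
  destruct (Rcase_abs (u n - l)); destruct (Rcase_abs (w n - l)); destruct (Rcase_abs (v n - l)); lra.
Qed.

Lemma sol_pos : forall t, positive_solution f t -> forall n, 0 < t n.
Proof.
  intros t [h0 hs] n. induction n. auto. rewrite hs. apply f_pos. auto.
Qed.

Lemma sol_iter : forall t, positive_solution f t -> forall n, iter n f (t O) = t n.
Proof.
  intros t [h0 hs] n. induction n. reflexivity. unfold iter in *. simpl. rewrite IHn. auto.
Qed.

Lemma sol_shift : forall t N, positive_solution f t -> positive_solution f (fun n => t (n + N)%nat).
Proof.
  intros t N ht. pose proof (sol_pos t ht) as hp. destruct ht as [h0 hs]. split.
  apply hp. intros n. simpl. apply hs.
Qed.

Lemma E1conv : forall t N, positive_solution f t -> (forall n, (N <= n)%nat -> tbar <= t n) ->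
  Un_cv t tbar.
Proof.
  intros t N ht hN. pose proof (sol_pos t ht) as hp. destruct ht as [h0 hs].
  apply (CV_shift t N).
  set (u := fun n => t (n + N)%nat).
  assert (hu : forall n, tbar <= u n) by (intros; apply hN; lia).
  assert (hdec : forall n, u (S n) <= u n).
  { intros n. unfold u. simpl. rewrite hs. specialize (hu n). unfold u in hu.
    destruct (Req_dec (t (n + N)%nat) tbar) as [E|E]. rewrite E, hfix. lra.
    left. apply P2. lra. }
  destruct (dec_conv u tbar hdec hu) as [l [hl hlb]].
  assert (f l = l).
  { apply (cv_fix f u l hl). intros. unfold u. simpl. apply hs. apply f_cont. lra. }
  assert (l = tbar) by (apply huniq; lra). subst l. exact hl.
Qed.

Fixpoint lseq (t : nat -> R) (n : nat) : R :=
  match n with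
  | O => t O
  | S m => if Rlt_dec (t (S m)) tbar then t (S m) else lseq t m
  end.

Section MainSeq.
Variable z0 : R.
Hypothesis hz0 : 0 < z0.
Hypothesis hz1 : z0 <= tbar.
Hypothesis Hg : forall y, 0 < y -> y < z0 -> y < g y.
Hypothesis HM : forall x, 0 < x -> x < z0 -> xm <= f x -> x < f xm.
Variable t : nat -> R.
Hypothesis ht : positive_solution f t.
Hypothesis ht0 : t O < tbar.
Hypothesis hbelow : forall n, t n < tbar -> t n < z0.

Lemma Orb : forall j, t j < z0 -> forall m, t j <= t (m + j)%nat <= f (t j).
Proof.
  intros j hj m. pose proof (sol_pos t ht) as hp. destruct ht as [_ hs].
  induction m.
  - simpl. pose proof (P2' (t j) (hp j)). lra.
  - simpl. rewrite hs. apply (Inv z0); auto; lra.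
Qed.

Lemma L0 : forall n, exists j, (j <= n)%nat /\ lseq t n = t j /\ t j < tbar.
Proof.
  induction n.
  - exists O. simpl. split; auto.
  - simpl. destruct (Rlt_dec (t (S n)) tbar).
    + exists (S n). auto.
    + destruct IHn as [j [h1 [h2 h3]]]. exists j. split. lia. auto.
Qed.

Lemma L1 : forall n k, (n <= k)%nat -> lseq t n <= t k <= f (lseq t n).
Proof.
  intros n k hk. destruct (L0 n) as [j [h1 [h2 h3]]]. rewrite h2.
  replace k with ((k - j) + j)%nat by lia. apply Orb. auto.
Qed.

Lemma L3 : forall n, t n < tbar -> lseq t n = t n.
Proof. intros n h. destruct n. reflexivity. simpl. destruct (Rlt_dec (t (S n)) tbar); tauto. Qed.

Lemma L2 : forall n, lseq t n <= lseq t (S n).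
Proof.
  intros n. simpl. destruct (Rlt_dec (t (S n)) tbar).
  - assert (hh : (n <= S n)%nat) by lia. pose proof (L1 n (S n) hh). lra.
  - lra.
Qed.


Lemma lseq_bounds : forall n, 0 < lseq t n < z0.
Proof.
  intros n. destruct (L0 n) as [j [h1 [h2 h3]]]. rewrite h2. split.
  apply (sol_pos t ht). auto.
Qed.

Lemma cv_eventually_gt : forall u l m, Un_cv u l -> m < l -> exists N, forall n, (N <= n)%nat -> m < u n.
Proof.
  intros u l m hu hm. destruct (hu (l - m)) as [N hN]. lra. exists N. intros n hn.
  specialize (hN n hn). unfold Rdist, Rabs in hN. destruct (Rcase_abs (u n - l)); lra.
Qed.
Lemma cv_eventually_lt : forall u l m, Un_cv u l -> l < m -> exists N, forall n, (N <= n)%nat -> u n < m.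
Proof.
  intros u l m hu hm. destruct (hu (m - l)) as [N hN]. lra. exists N. intros n hn.
  specialize (hN n hn). unfold Rdist, Rabs in hN. destruct (Rcase_abs (u n - l)); lra.
Qed.

Lemma Main_cv : (forall N, exists n, (N <= n)%nat /\ t n < tbar) -> Un_cv (lseq t) z0.
Proof.
  intros hinf. pose proof (sol_pos t ht) as hp. pose proof ht as [_ hs].
  destruct (inc_conv (lseq t) z0 L2 (fun n => Rlt_le _ _ (proj2 (lseq_bounds n))))
    as [al [hal [hal1 hal2]]].
  destruct (Req_dec al z0) as [E|E]. { subst; auto. }
  exfalso. assert (hal3 : al < z0) by lra.
  assert (hal0 : 0 < al) by (pose proof (hal2 O); pose proof (lseq_bounds O); lra).
  assert (hgal : al < g al) by (apply Hg; lra).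
  assert (hB : exists N2, forall n, (N2 <= n)%nat -> al < g (lseq t n)).
  { apply (cv_eventually_gt (fun n => g (lseq t n)) (g al)); auto.
    apply (continuity_seq g); auto. apply g_cont; auto. }
  destruct hB as [N2 hN2].
  assert (hA : exists N1, forall n, (N1 <= n)%nat -> t (S n) < tbar -> g (lseq t n) <= t (S n)).
  { assert (gen : forall n, t (S n) < tbar ->
        Rmin (g (lseq t n)) (f xm) <= t (S n) /\ (f (lseq t n) <= xm -> g (lseq t n) <= t (S n))).
    { intros n hn. assert (tbar <= t n).
      { destruct (Rlt_dec (t n) tbar); [|lra]. rewrite hs in hn.
        pose proof (P1 (t n) (hp n) r). lra. }
      assert (hh : (n <= n)%nat) by lia. pose proof (L1 n n hh).
      rewrite hs. apply MinL. apply hp. lra. }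
    destruct (Rle_dec xm (f al)) as [hxa|hxa].
    - assert (al < f xm) by (apply HM; lra). exists O. intros n hn0 hn.
      destruct (gen n hn) as [g1 _]. rewrite <- (L3 (S n) hn) in g1 |- *.
      pose proof (hal2 (S n)). unfold Rmin in g1. destruct (Rle_dec (g (lseq t n)) (f xm)); lra.
    - assert (hc : Un_cv (fun n => f (lseq t n)) (f al)).
      { apply continuity_seq; auto. apply f_cont; auto. }
      destruct (cv_eventually_lt (fun n => f (lseq t n)) (f al) xm hc) as [N1 hN1]. lra.
      exists N1. intros n hn1 hn. destruct (gen n hn) as [_ g2]. apply g2. left. apply hN1; auto. }
  destruct hA as [N1 hN1].
  destruct (hinf (S (max N1 N2))) as [m [hm1 hm2]].
  destruct m as [|n]. lia.
  assert (g (lseq t n) <= t (S n)) by (apply hN1; auto; lia).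
  assert (al < g (lseq t n)) by (apply hN2; lia).
  pose proof (hal2 (S n)). rewrite (L3 (S n) hm2) in *. lra.
Qed.
End MainSeq.

Lemma inf_or_ev : forall (t : nat -> R),
  (forall N, exists n, (N <= n)%nat /\ t n < tbar) \/
  (exists N, forall n, (N <= n)%nat -> tbar <= t n).
Proof.
  intros t. destruct (classic (forall N, exists n, (N <= n)%nat /\ t n < tbar)) as [h|h]; [left; auto|right].
  apply not_all_ex_not in h. destruct h as [N hN]. exists N. intros n hn.
  destruct (Rlt_dec (t n) tbar); [|lra]. exfalso. apply hN. exists n. auto.
Qed.

Lemma shift_inf : forall (t : nat -> R) N0, (forall N, exists n, (N <= n)%nat /\ t n < tbar) ->
  (forall N, exists n, (N <= n)%nat /\ t (n + N0)%nat < tbar).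
Proof.
  intros t N0 h N. destruct (h (N + N0)%nat) as [n [h1 h2]]. exists (n - N0)%nat.
  split. lia. replace (n - N0 + N0)%nat with n by lia. auto.
Qed.

Lemma inf_first : forall (t : nat -> R), (forall N, exists n, (N <= n)%nat /\ t n < tbar) ->
  exists N0, t N0 < tbar.
Proof. intros t h. destruct (h O) as [n [_ h2]]. eauto. Qed.

Lemma partB : (forall p q, ~ is_2cycle f p q) ->
  forall t, positive_solution f t -> Un_cv t tbar.
Proof.
  intros hno t ht.
  assert (Hg : forall y, 0 < y -> y < tbar -> y < g y).
  { apply SignG. intros y h0 h1 E. apply (hno y (f y)). apply g_fix_cycle; auto. lra. }
  assert (HM : forall x, 0 < x -> x < tbar -> xm <= f x -> x < f xm).
  { intros x h0 h1 h2. apply (LemM tbar x); auto; try lra. intros. lra. }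
  destruct (inf_or_ev t) as [hinf|[N hN]].
  - destruct (inf_first t hinf) as [N0 hN0].
    set (t' := fun n => t (n + N0)%nat).
    assert (ht' : positive_solution f t') by (apply sol_shift; auto).
    assert (ht0 : t' O < tbar) by (unfold t'; simpl; auto).
    assert (hb' : forall n, t' n < tbar -> t' n < tbar) by auto.
    pose proof (Main_cv tbar htb (Rle_refl _) Hg HM t' ht' ht0 hb' (shift_inf t N0 hinf)) as hcv.
    apply (CV_shift t N0).
    apply (cv_squeeze (lseq t') t' (fun n => f (lseq t' n))); auto.
    + assert (E : Un_cv (fun n => f (lseq t' n)) (f tbar)).
      { apply continuity_seq; auto. apply f_cont; auto. }
      rewrite hfix in E. exact E.
    + intros n. apply (L1 tbar htb (Rle_refl _) Hg HM t' ht' ht0 hb'). lia.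
  - apply (E1conv t N ht hN).
Qed.

Lemma vm_rel : c + 3 * d * vm = sq.
Proof. unfold vm. field. lra. Qed.
Lemma vM_rel : c + 3 * d * vM = - sq.
Proof. unfold vM. field. lra. Qed.

Lemma f_ge_m0_c1 : 4 * b * d <= c ^ 2 -> forall x, 0 < x -> f xm <= f x.
Proof.
  intros h x hx. pose proof sq_pos. pose proof sq_sq. pose proof vm_rel.
  assert (h2 : - c <= 2 * sq) by nra.
  rewrite !f_P by (lra || apply xm_pos). rewrite inv_xm.
  assert (0 < / x) by (apply Rinv_0_lt_compat; lra).
  pose proof (P_vm_fact (/ x)). assert (0 <= (/ x - vm) ^ 2) by (apply pow2_ge_0).
  assert (0 <= sq + d * (/ x - vm)) by nra. nra.
Qed.

Lemma eta_eq : - d * xm / (c * xm + 2 * d) = d / (d * vm - sq).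
Proof.
  pose proof xm_pos. pose proof inv_xm. pose proof vm_rel.
  assert (xm * vm = 1) by (rewrite <- H0; field; lra).
  assert (c * xm + 2 * d = xm * (sq - d * vm)) by nra.
  rewrite H3. destruct (Req_dec (sq - d * vm) 0) as [E|E].
  - rewrite E. replace (d * vm - sq) with 0 by lra. rewrite Rmult_0_r. unfold Rdiv. rewrite Rinv_0. ring.
  - field. split; lra.
Qed.

Lemma f_ge_m0_eta : c ^ 2 < 4 * b * d -> forall x, 0 < x -> x <= - d * xm / (c * xm + 2 * d) ->
  f xm <= f x.
Proof.
  intros h x hx hxe. rewrite eta_eq in hxe. pose proof sq_pos. pose proof sq_sq. pose proof vm_rel.
  assert (h2 : 2 * sq < - c) by nra.
  assert (hk : 0 < d * vm - sq) by nra.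
  rewrite !f_P by (lra || apply xm_pos). rewrite inv_xm.
  assert (/ (d / (d * vm - sq)) <= / x) by (apply inv_le; auto).
  replace (/ (d / (d * vm - sq))) with (vm - sq / d) in H2 by (field; split; lra).
  pose proof (P_vm_fact (/ x)). assert (0 <= (/ x - vm) ^ 2) by (apply pow2_ge_0).
  assert (0 <= sq + d * (/ x - vm)).
  { assert (d * (vm - sq / d) <= d * / x) by (apply Rmult_le_compat_l; lra).
    replace (d * (vm - sq / d)) with (d * vm - sq) in H5 by (field; lra). lra. }
  nra.
Qed.

Lemma gxm_gt_tbar : tbar < f (f xm).
Proof. apply P1. apply m0_pos. apply m0_lt_tbar. Qed.

Lemma partA1 : (forall x, 0 < x -> x <= f (f xm) -> f xm <= f x) ->
  forall x, f xm <= x <= f (f xm) -> f xm <= f x <= f (f xm).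
Proof.
  intros hlow x [h1 h2]. pose proof m0_pos. pose proof m0_lt_tbar. split.
  - apply hlow; lra.
  - destruct (Rle_dec x tbar).
    + apply f_dec1'; lra.
    + pose proof (P2 x). lra.
Qed.

Lemma partA2 : 4 * b * d <= c ^ 2 -> forall t, positive_solution f t ->
  exists N, forall n, (N <= n)%nat -> f xm <= t n <= f (f xm).
Proof.
  intros h t ht. pose proof (sol_pos t ht) as hp. pose proof ht as [_ hs].
  assert (hlow : forall n, (1 <= n)%nat -> f xm <= t n).
  { intros n hn. destruct n. lia. rewrite hs. apply f_ge_m0_c1; auto. }
  assert (hex : exists N, (1 <= N)%nat /\ t N <= f (f xm)).
  { destruct (classic (exists N, (1 <= N)%nat /\ t N <= f (f xm))) as [e|e]; auto. exfalso.
    assert (hall : forall n, (1 <= n)%nat -> f (f xm) < t n).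
    { intros n hn. destruct (Rlt_dec (f (f xm)) (t n)); auto. exfalso. apply e. exists n. split; auto. lra. }
    pose proof gxm_gt_tbar.
    assert (Un_cv t tbar).
    { apply (E1conv t 1%nat ht). intros n hn. specialize (hall n hn). lra. }
    assert (f (f xm) <= tbar).
    { apply (cv_ge (fun n => t (n + 1)%nat) tbar). apply CV_shift'. auto.
      intros n. left. apply hall. lia. }
    lra. }
  destruct hex as [N [hN1 hN2]]. exists N.
  assert (forall k, f xm <= t (k + N)%nat <= f (f xm)).
  { induction k. simpl. split; auto. simpl. rewrite hs. apply partA1; auto.
    intros. apply f_ge_m0_c1; auto. }
  intros n hn. replace n with ((n - N) + N)%nat by lia. auto.
Qed.

Lemma zeta_eq : - d * xM / (c * xM + 2 * d) = d / (sq + d * vM).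
Proof.
  pose proof xM_pos. pose proof inv_xM. pose proof vM_rel. pose proof vM_pos. pose proof sq_pos.
  assert (xM * vM = 1) by (rewrite <- H0; field; lra).
  assert (c * xM + 2 * d = - (xM * (sq + d * vM))) by nra.
  rewrite H5. field. split. nra. lra.
Qed.

Lemma preimage_unique : tbar < - d * xM / (c * xM + 2 * d) ->
  forall y, 0 < y -> f y = tbar -> y = tbar.
Proof.
  intros hz y hy hfy. rewrite zeta_eq in hz.
  pose proof vM_pos. pose proof sq_pos. pose proof vM_lt_vm.
  set (z := d / (sq + d * vM)) in *.
  assert (hz0 : 0 < z) by (unfold z; apply Rdiv_lt_0_compat; nra).
  assert (hiz : / z = vM + sq / d) by (unfold z; field; split; nra).
  assert (hzm : z < xm).
  { assert (vm < / z).
    { rewrite hiz. unfold vm, vM. apply (Rmult_lt_reg_r (3 * d)). lra. field_simplify; lra. }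
    rewrite <- inv_xm in H2. pose proof xm_pos.
    destruct (Rlt_dec z xm); auto. exfalso. assert (/ z <= / xm) by (apply inv_le; lra). lra. }
  assert (hfz : f z = f xM).
  { rewrite !f_P by (lra || apply xM_pos). rewrite inv_xM, hiz.
    pose proof (P_vM_fact (vM + sq / d)).
    replace (- sq + d * (vM + sq / d - vM)) with 0 in H2 by (field; lra). lra. }
  destruct (Rle_dec y xm).
  - destruct (Req_dec y tbar); auto. exfalso. destruct (Rlt_dec y tbar).
    + pose proof (P1 y hy r0). lra.
    + pose proof (P1' y ltac:(lra) r). lra.
  - exfalso. pose proof (f_le_fxM y ltac:(lra)).
    assert (f z < f tbar) by (apply f_dec1; lra). lra.
Qed.

Lemma iter_pos : forall n x, 0 < x -> 0 < iter n f x.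
Proof. induction n; intros x hx. exact hx. unfold iter in *. simpl. apply f_pos. auto. Qed.

Lemma partC1 : tbar < - d * xM / (c * xM + 2 * d) ->
  forall t0, in_preimage_set f tbar t0 <-> t0 = tbar.
Proof.
  intros hz t0. split.
  - intros [h0 [n hn]]. revert t0 h0 hn. induction n; intros t0 h0 hn.
    + exact hn.
    + apply IHn; auto. apply preimage_unique; auto. apply iter_pos; auto.
  - intros ->. split; auto. exists O. reflexivity.
Qed.

Lemma sub_cv : forall u l M, Un_cv u l -> Un_cv (fun k => u (M + 2 * k)%nat) l.
Proof.
  intros u l M hu e he. destruct (hu e he) as [N hN]. exists N. intros n hn. apply hN. lia.
Qed.

Lemma Conv2 : forall t p q N, Un_cv (fun k => t (N + 2 * k)%nat) p ->
  Un_cv (fun k => t (N + 2 * k + 1)%nat) q -> converges_to_2cycle t p q.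
Proof.
  intros t p q N h1 h2. unfold converges_to_2cycle.
  destruct (Nat.Even_or_Odd N) as [[M HM]|[M HM]].
  - left. split.
    + apply (CV_shift _ M). apply (Un_cv_ext (fun k => t (N + 2 * k)%nat)); auto.
      intros n. f_equal. lia.
    + apply (CV_shift _ M). apply (Un_cv_ext (fun k => t (N + 2 * k + 1)%nat)); auto.
      intros n. f_equal. lia.
  - right. split.
    + apply (CV_shift _ (S M)). apply (Un_cv_ext (fun k => t (N + 2 * k + 1)%nat)); auto.
      intros n. f_equal. lia.
    + apply (CV_shift _ M). apply (Un_cv_ext (fun k => t (N + 2 * k)%nat)); auto.
      intros n. f_equal. lia.
Qed.

Lemma cont_delta : forall x0 e, 0 < x0 -> 0 < e -> exists dl, 0 < dl /\
  forall y, y <> x0 -> Rabs (y - x0) < dl -> Rabs (f y - f x0) < e.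
Proof.
  intros x0 e h0 he. pose proof (f_cont x0 h0) as hc.
  unfold continuity_pt, continue_in, limit1_in, limit_in in hc.
  destruct (hc e he) as [dl [hdl hh]]. exists dl. split; auto.
  intros y hy1 hy2. apply (hh y). split. split. exact I. auto. exact hy2.
Qed.

Section PartC.
Variables p q : R.
Hypothesis hcyc : is_2cycle f p q.
Hypothesis hcu : forall p' q', is_2cycle f p' q' -> (p' = p /\ q' = q) \/ (p' = q /\ q' = p).
Hypothesis hpt : p < tbar.
Hypothesis htq : tbar < q.
Hypothesis hqm : q <= xm.
Hypothesis hSch : forall x, p < x -> x < tbar -> g x < x.

Lemma hp0 : 0 < p. Proof. destruct hcyc; tauto. Qed.
Lemma hfp : f p = q. Proof. destruct hcyc as [_ [_ [_ [h _]]]]; auto. Qed.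
Lemma hfq : f q = p. Proof. destruct hcyc as [_ [_ [_ [_ h]]]]; auto. Qed.

Lemma gfix_c : forall y, 0 < y -> g y = y -> y = tbar \/ y = p \/ y = q.
Proof.
  intros y h0 h1. destruct (Req_dec y tbar); auto. right.
  destruct (hcu y (f y)) as [[e1 e2]|[e1 e2]]. apply g_fix_cycle; auto. auto. auto.
Qed.

Lemma Hg_c : forall y, 0 < y -> y < p -> y < g y.
Proof.
  apply SignG. intros y h0 h1 E. destruct (gfix_c y h0 E) as [e|[e|e]]; subst; lra.
Qed.

Lemma HM_c : forall x, 0 < x -> x < p -> xm <= f x -> x < f xm.
Proof.
  pose proof hp0. pose proof hfp. pose proof hfq.
  intros x h0 h1 h2. apply (LemM p x); auto; try lra.
  - apply Hg_c.
  - intros y hy1 hy2 hy3. destruct (Req_dec y p).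
    + subst y. rewrite <- hy3, H0, H1. auto.
    + assert (f y < f p) by (apply f_dec1; lra). lra.
Qed.

Lemma in_pq_step : forall x, p <= x -> x <= q -> p <= f x <= q.
Proof.
  pose proof hp0. pose proof hfp. pose proof hfq.
  intros. split. rewrite <- H1. apply f_dec1'; lra. rewrite <- H0. apply f_dec1'; lra.
Qed.

Lemma low_step : forall x, p <= x -> x < tbar -> tbar < f x /\ f x <= q.
Proof.
  pose proof hp0. pose proof hfp. intros. split. apply P1; lra. rewrite <- H0. apply f_dec1'; lra.
Qed.
Lemma high_step : forall x, tbar < x -> x <= q -> p <= f x /\ f x < tbar.
Proof.
  pose proof hp0. pose proof hfq. intros. split. rewrite <- H0. apply f_dec1'; lra. apply P1'; lra.
Qed.

Lemma Case1 : forall t, positive_solution f t -> (forall n, t n <> tbar) ->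
  (exists n, p <= t n <= q) -> converges_to_2cycle t p q.
Proof.
  intros t ht hne [n hn]. pose proof (sol_pos t ht) as hpos. pose proof ht as [_ hs].
  pose proof hp0. pose proof hfp.
  assert (hN : exists N, p <= t N < tbar).
  { destruct (Rlt_dec (t n) tbar). exists n. lra.
    exists (S n). rewrite hs. assert (tbar < t n) by (pose proof (hne n); lra).
    pose proof (high_step (t n)). lra. }
  destruct hN as [N hN].
  set (e := fun k => t (N + 2 * k)%nat).
  assert (hes : forall k, e (S k) = g (e k)).
  { intros k. unfold e. replace (N + 2 * S k)%nat with (S (S (N + 2 * k))) by lia.
    rewrite !hs. auto. }
  assert (hinv : forall k, p <= e k < tbar).
  { induction k. unfold e. rewrite Nat.add_0_r. auto.
    rewrite hes. destruct (low_step (e k)) as [l1 l2]; try lra.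
    destruct (high_step (f (e k))) as [m1 m2]; lra. }
  assert (hdec : forall k, e (S k) <= e k).
  { intros k. rewrite hes. specialize (hinv k). destruct (Req_dec (e k) p) as [E|E].
    - rewrite E, H0, hfq. lra.
    - left. apply hSch; lra. }
  destruct (dec_conv e p hdec (fun k => proj1 (hinv k))) as [L [hL hLp]].
  assert (hL1 : L <= e O) by (apply (cv_le e L (e O) hL); intros k; induction k; [lra|]; pose proof (hdec k); lra).
  assert (hgL : g L = L).
  { apply (cv_fix g e L hL hes). apply g_cont; lra. }
  assert (L = p).
  { pose proof (hinv O). destruct (gfix_c L ltac:(lra) hgL) as [E|[E|E]]; lra. }
  subst L.
  apply (Conv2 t p q N hL).
  apply (Un_cv_ext (fun k => f (e k))).
  { intros k. unfold e. rewrite Nat.add_1_r. symmetry. apply hs. }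
  rewrite <- H0. apply continuity_seq; auto. apply f_cont; lra.
Qed.

Lemma Case2 : forall t, positive_solution f t -> (forall n, t n <> tbar) ->
  (forall n, ~ (p <= t n <= q)) -> converges_to_2cycle t p q.
Proof.
  intros t ht hne hout. pose proof (sol_pos t ht) as hpos. pose proof ht as [_ hs].
  pose proof hp0. pose proof hfp. pose proof hfq.
  destruct (inf_or_ev t) as [hinf|[N hN]].
  2:{ exfalso. pose proof (E1conv t N ht hN).
      assert (q <= tbar).
      { apply (cv_ge (fun n => t (n + N)%nat) tbar). apply CV_shift'. auto.
        intros n. specialize (hN (n + N)%nat ltac:(lia)). specialize (hout (n + N)%nat).
        destruct (Rle_dec p (t (n + N)%nat)); [|lra]. destruct (Rle_dec (t (n + N)%nat) q); [|lra].
        exfalso; auto. }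
      lra. }
  destruct (inf_first t hinf) as [N0 hN0].
  set (t' := fun n => t (n + N0)%nat).
  assert (ht' : positive_solution f t') by (apply sol_shift; auto).
  assert (ht0 : t' O < tbar) by (unfold t'; simpl; auto).
  assert (hb' : forall n, t' n < tbar -> t' n < p).
  { intros n hn. unfold t' in *. specialize (hout (n + N0)%nat).
    destruct (Rlt_dec (t (n + N0)%nat) p); auto. exfalso. apply hout. lra. }
  assert (hpt' : p <= tbar) by lra.
  pose proof (Main_cv p H hpt' Hg_c HM_c t' ht' ht0 hb' (shift_inf t N0 hinf)) as hcv.
  pose proof (L1 p H hpt' Hg_c HM_c t' ht' ht0 hb') as hL1.
  pose proof (L3 t') as hL3.
  pose proof (sol_pos t' ht') as hpos'. pose proof ht' as [_ hs'].
  assert (hfl : Un_cv (fun n => f (lseq t' n)) q).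
  { rewrite <- H0. apply continuity_seq; auto. apply f_cont; auto. }
  destruct (cont_delta q (tbar - p)) as [dl [hdl hdelta]]; try lra.
  destruct (cv_eventually_lt _ _ (q + dl) hfl) as [N1 hN1]. lra.
  assert (halt : forall n, (N1 <= n)%nat -> tbar < t' n -> t' (S n) < tbar).
  { intros n hn hgt. rewrite hs'. assert (hh : (n <= n)%nat) by lia. specialize (hL1 n n hh).
    specialize (hN1 n hn). assert (q < t' n).
    { specialize (hout (n + N0)%nat). unfold t' in *.
      destruct (Rle_dec (t (n + N0)%nat) q); [|lra]. exfalso. apply hout. lra. }
    assert (Rabs (f (t' n) - f q) < tbar - p).
    { apply hdelta. lra. unfold Rabs. destruct (Rcase_abs (t' n - q)); lra. }
    rewrite H1 in H3. unfold Rabs in H3. destruct (Rcase_abs (f (t' n) - p)); lra. }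
  assert (hM : exists M, (N1 <= M)%nat /\ t' M < tbar).
  { destruct (Rlt_dec (t' N1) tbar). exists N1. auto.
    exists (S N1). split. lia. apply halt. lia. assert (t' N1 <> tbar) by (apply hne). lra. }
  destruct hM as [M [hM1 hM2]].
  assert (hev : forall k, t' (M + 2 * k)%nat < tbar).
  { induction k. rewrite Nat.add_0_r. auto.
    replace (M + 2 * S k)%nat with (S (S (M + 2 * k))) by lia.
    apply halt. lia. rewrite hs'. apply P1; auto. }
  assert (hc1 : Un_cv (fun k => t' (M + 2 * k)%nat) p).
  { apply (Un_cv_ext (fun k => lseq t' (M + 2 * k)%nat)). intros k. apply hL3. auto.
    apply sub_cv. auto. }
  apply (Conv2 t p q (M + N0)).
  - apply (Un_cv_ext (fun k => t' (M + 2 * k)%nat)); auto. intros k. unfold t'. f_equal. lia.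
  - apply (Un_cv_ext (fun k => f (t' (M + 2 * k)%nat))).
    { intros k. unfold t'. rewrite <- hs. f_equal. lia. }
    rewrite <- H0. apply continuity_seq; auto. apply f_cont; auto.
Qed.

Lemma partC2 : forall t, positive_solution f t ->
  (~ in_preimage_set f tbar (t O) -> converges_to_2cycle t p q) /\
  (in_preimage_set f tbar (t O) -> Un_cv t tbar).
Proof.
  intros t ht. pose proof (sol_pos t ht) as hpos. pose proof ht as [_ hs]. split.
  - intros hS. assert (hne : forall n, t n <> tbar).
    { intros n E. apply hS. split. auto. exists n. rewrite sol_iter; auto. }
    destruct (classic (exists n, p <= t n <= q)) as [h|h].
    + apply Case1; auto.
    + apply Case2; auto. intros n hn. apply h. eauto.
  - intros [_ [n hn]]. rewrite sol_iter in hn by auto.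
    apply (E1conv t n ht). intros k hk.
    assert (forall m, t (m + n)%nat = tbar).
    { induction m. simpl. auto. simpl. rewrite hs, IHm. auto. }
    replace k with ((k - n) + n)%nat by lia. rewrite H. lra.
Qed.
End PartC.

(* ---------- Schwarzian argument ---------- *)
Local Notation F1 := (D.f1 b c d).
Local Notation F2 := (D.f2 b c d).
Local Notation F3 := (D.f3 b c d).
Definition h1 x := F1 (f x) * F1 x.
Definition h2 x := F2 (f x) * (F1 x * F1 x) + F1 (f x) * F2 x.
Definition h3 x := F3 (f x) * (F1 x) ^ 3 + 3 * F2 (f x) * F1 x * F2 x + F1 (f x) * F3 x.
Definition Sf x := 2 * F1 x * F3 x - 3 * F2 x ^ 2.

Lemma dg : forall x, 0 < x -> derivable_pt_lim g x (h1 x).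
Proof.
  intros x hx. unfold h1.
  apply (dl_comp f f x). apply D.d_f; auto. apply D.d_f. apply f_pos; auto.
Qed.
Lemma dh1 : forall x, 0 < x -> derivable_pt_lim h1 x (h2 x).
Proof.
  intros x hx. unfold h1. eapply dl_eq.
  apply dl_mult. apply (dl_comp F1 f x). apply D.d_f; auto. apply D.d_f1. apply f_pos; auto.
  apply D.d_f1; auto.
  unfold h2. ring.
Qed.
Lemma dh2 : forall x, 0 < x -> derivable_pt_lim h2 x (h3 x).
Proof.
  intros x hx. pose proof (f_pos x hx). unfold h2. eapply dl_eq.
  apply dl_plus. apply dl_mult. apply (dl_comp F2 f x). apply D.d_f; auto. apply D.d_f2; auto.
  apply (dl_mult F1 F1 x). apply D.d_f1; auto. apply D.d_f1; auto.
  apply dl_mult. apply (dl_comp F1 f x). apply D.d_f; auto. apply D.d_f1; auto.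
  apply D.d_f2; auto.
  unfold h3. simpl. ring.
Qed.

Lemma Sh_id : forall x, 2 * h1 x * h3 x - 3 * h2 x ^ 2 = Sf (f x) * (F1 x) ^ 4 + (F1 (f x)) ^ 2 * Sf x.
Proof. intros. unfold h1, h2, h3, Sf. ring. Qed.

Lemma Sf_neg : forall x, 0 < x -> Sf x < 0.
Proof.
  intros x hx. unfold Sf, D.f1, D.f2, D.f3.
  assert (hu : 0 < / x) by (apply Rinv_0_lt_compat; lra).
  replace (2 * (- b / x ^ 2 - 2 * c / x ^ 3 - 3 * d / x ^ 4) * (- 6 * b / x ^ 4 - 24 * c / x ^ 5 - 60 * d / x ^ 6) -
     3 * (2 * b / x ^ 3 + 6 * c / x ^ 4 + 12 * d / x ^ 5) ^ 2)
    with (12 * (/ x) ^ 8 * (b * d - c ^ 2 - 4 * c * d * / x - 6 * d ^ 2 * (/ x) ^ 2)) by (field; lra).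
  set (u := / x) in *.
  assert (0 < u ^ 8) by (apply pow_lt; auto).
  assert (b * d - c ^ 2 - 4 * c * d * u - 6 * d ^ 2 * u ^ 2 < 0).
  { assert (0 <= (d * u + c / 3) ^ 2) by apply pow2_ge_0. nra. }
  nra.
Qed.

Lemma F1_neg : forall x, 0 < x -> x < xm -> F1 x < 0.
Proof.
  intros x h0 h1'. unfold D.f1.
  assert (hu : vm < / x) by (rewrite <- inv_xm; apply inv_lt; lra).
  pose proof vM_lt_vm. pose proof sq_sq.
  replace (- b / x ^ 2 - 2 * c / x ^ 3 - 3 * d / x ^ 4) with
    (- (/ x) ^ 2 * (3 * d * ((/ x) - vm) * ((/ x) - vM))).
  2:{ unfold vm, vM. field_simplify; [|lra|lra]. 
      assert (b = (c^2 - sq*sq)/(3*d)) by (field_simplify_eq; lra).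
      rewrite H1. field. lra. }
  set (u := / x) in *. assert (0 < u) by (unfold u; apply Rinv_0_lt_compat; lra).
  assert (0 < 3 * d * (u - vm) * (u - vM)).
  { apply Rmult_lt_0_compat. apply Rmult_lt_0_compat; lra. lra. }
  assert (0 < u ^ 2) by (apply pow_lt; auto). nra.
Qed.

Lemma h1_cont : forall x, 0 < x -> continuity_pt h1 x.
Proof. intros. apply (derivable_continuous_pt h1 x (exist _ (h2 x) (dh1 x H))). Qed.

Section SW.
Variables p q : R.
Hypothesis hcyc : is_2cycle f p q.
Hypothesis hcu : forall p' q', is_2cycle f p' q' -> (p' = p /\ q' = q) \/ (p' = q /\ q' = p).
Hypothesis hpt : p < tbar.
Hypothesis htq : tbar < q.
Hypothesis hqm : q <= xm.

Lemma Schwarz : forall x, p < x -> x < tbar -> g x < x.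
Proof.
  assert (hp0 : 0 < p) by (destruct hcyc; tauto).
  assert (hfp : f p = q) by (destruct hcyc as [_ [_ [_ [h _]]]]; auto).
  assert (hfq : f q = p) by (destruct hcyc as [_ [_ [_ [_ h]]]]; auto).
  assert (hgfix : forall y, 0 < y -> g y = y -> y = tbar \/ y = p \/ y = q).
  { intros y h0 hh. destruct (Req_dec y tbar); auto. right.
    destruct (hcu y (f y)) as [[e1 e2]|[e1 e2]]. apply g_fix_cycle; auto. auto. auto. }
  assert (hdphi : forall y, 0 < y -> derivable_pt_lim (fun z => g z - z) y (h1 y - 1)).
  { intros. apply dl_minus_id. apply dg; auto. }
  destruct (MVT_cor2 (fun z => g z - z) (fun z => h1 z - 1) p tbar) as [r1 [e1 hr1]]. lra.
  { intros. apply hdphi. lra. }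
  destruct (MVT_cor2 (fun z => g z - z) (fun z => h1 z - 1) tbar q) as [r2 [e2 hr2]]. lra.
  { intros. apply hdphi. lra. }
  simpl in e1, e2. rewrite hfp, hfq, hfix in e1. rewrite hfq, hfp, hfix in e2.
  assert (hh1 : h1 r1 = 1) by nra. assert (hh2 : h1 r2 = 1) by nra.
  assert (key : forall x0, r1 <= x0 <= r2 -> 1 <= h1 x0).
  { intros x0 hx0. destruct (Rle_dec 1 (h1 x0)) as [|hlt]; auto. exfalso.
    destruct (continuity_ab_min h1 r1 r2) as [r [hmin hr]]. lra.
    { intros. apply h1_cont. lra. }
    assert (hrl : h1 r < 1) by (pose proof (hmin x0 hx0); lra).
    assert (hr' : r1 < r < r2).
    { split; destruct hr as [hra hrb]; destruct hra as [hra|hra]; destruct hrb as [hrb|hrb];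
        subst; try lra. }
    assert (hfr : 0 < f r < xm).
    { split. apply f_pos; lra. assert (f r < f p) by (apply f_dec1; lra). lra. }
    assert (hh1p : 0 < h1 r).
    { unfold h1. pose proof (F1_neg r ltac:(lra) ltac:(lra)). pose proof (F1_neg (f r) ltac:(lra) ltac:(lra)). nra. }
    assert (hh2z : h2 r = 0).
    { pose proof (dh1 r ltac:(lra)) as dd.
      destruct (Rtotal_order (h2 r) 0) as [lt|[eq|gt]]; auto; exfalso.
      - destruct (dd (- h2 r / 2)) as [dl hdl]. lra.
        set (hh := Rmin (dl / 2) ((r2 - r) / 2)).
        assert (hhp : 0 < hh /\ hh <= dl / 2 /\ hh <= (r2 - r) / 2).
        { unfold hh, Rmin. pose proof (cond_pos dl). destruct (Rle_dec (dl / 2) ((r2 - r) / 2)); lra. }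
        specialize (hdl hh ltac:(lra)). assert (Rabs hh < dl) by (rewrite Rabs_right; lra).
        specialize (hdl H). pose proof (hmin (r + hh) ltac:(lra)).
        assert (hq : (h1 (r + hh) - h1 r) / hh < 0).
        { unfold Rabs in hdl. destruct (Rcase_abs ((h1 (r + hh) - h1 r) / hh - h2 r)); lra. }
        assert (h1 (r + hh) - h1 r = (h1 (r + hh) - h1 r) / hh * hh) by (field; lra). nra.
      - destruct (dd (h2 r / 2)) as [dl hdl]. lra.
        set (hh := Rmin (dl / 2) ((r - r1) / 2)).
        assert (hhp : 0 < hh /\ hh <= dl / 2 /\ hh <= (r - r1) / 2).
        { unfold hh, Rmin. pose proof (cond_pos dl). destruct (Rle_dec (dl / 2) ((r - r1) / 2)); lra. }
        specialize (hdl (- hh) ltac:(lra)). assert (Rabs (- hh) < dl) by (rewrite Rabs_left; lra).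
        specialize (hdl H). pose proof (hmin (r + - hh) ltac:(lra)).
        assert (hq : (h1 (r + - hh) - h1 r) / - hh > 0).
        { unfold Rabs in hdl. destruct (Rcase_abs ((h1 (r + - hh) - h1 r) / - hh - h2 r)); lra. }
        assert (h1 (r + - hh) - h1 r = (h1 (r + - hh) - h1 r) / - hh * - hh) by (field; lra). nra. }
    assert (hh3 : h3 r < 0).
    { pose proof (Sh_id r). pose proof (Sf_neg r ltac:(lra)). pose proof (Sf_neg (f r) ltac:(lra)).
      pose proof (F1_neg r ltac:(lra) ltac:(lra)).
      assert (0 < F1 r ^ 4) by (replace (F1 r ^ 4) with ((F1 r * F1 r) * (F1 r * F1 r)) by ring; apply Rmult_lt_0_compat; nra).
      assert (0 <= F1 (f r) ^ 2) by apply pow2_ge_0.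
      rewrite hh2z in H. nra. }
    pose proof (dh2 r ltac:(lra)) as dd.
    destruct (dd (- h3 r / 2)) as [dl hdl]. lra.
    set (e0 := Rmin (dl / 2) ((r2 - r) / 2)).
    assert (he0 : 0 < e0 /\ e0 <= dl / 2 /\ e0 <= (r2 - r) / 2).
    { unfold e0, Rmin. pose proof (cond_pos dl). destruct (Rle_dec (dl / 2) ((r2 - r) / 2)); lra. }
    destruct (MVT_cor2 h1 h2 r (r + e0)) as [xi [exi hxi]]. lra.
    { intros. apply dh1. lra. }
    specialize (hdl (xi - r) ltac:(lra)). assert (Rabs (xi - r) < dl) by (rewrite Rabs_right; lra).
    specialize (hdl H). replace (r + (xi - r)) with xi in hdl by ring. rewrite hh2z in hdl.
    assert (h2 xi / (xi - r) < 0).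
    { unfold Rabs in hdl. destruct (Rcase_abs ((h2 xi - 0) / (xi - r) - h3 r)); lra. }
    assert (h2 xi < 0).
    { assert (h2 xi = h2 xi / (xi - r) * (xi - r)) by (field; lra). nra. }
    pose proof (hmin (r + e0) ltac:(lra)). nra. }
  assert (hle : forall y, r1 <= y -> y < tbar -> g y < y).
  { intros y hy1 hy2.
    destruct (MVT_cor2 (fun z => g z - z) (fun z => h1 z - 1) y tbar) as [xi [exi hxi]]. lra.
    { intros. apply hdphi. lra. }
    simpl in exi. rewrite hfix in exi. pose proof (key xi ltac:(lra)).
    assert (g y <= y) by nra.
    destruct (Req_dec (g y) y) as [E|E]; [|lra].
    destruct (hgfix y ltac:(lra) E) as [E'|[E'|E']]; lra. }
  intros x hx1 hx2. destruct (Rle_dec r1 x). apply hle; lra.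
  destruct (Rlt_dec (g x) x) as [|hn]; auto. exfalso.
  assert (g x <> x).
  { intro E. destruct (hgfix x ltac:(lra) E) as [E'|[E'|E']]; lra. }
  pose proof (hle r1 ltac:(lra) ltac:(lra)).
  destruct (IVT_interv (fun y => y - g y) x r1) as [z [hz1 hz2]].
  - intros. apply cont_id_minus. apply g_cont. lra.
  - lra.
  - lra.
  - lra.
  - assert (g z = z) by lra. destruct (hgfix z ltac:(lra) H1) as [E'|[E'|E']]; lra.
Qed.
End SW.
End Alg.

Lemma Q_pos : forall a b c d cm, 0 < a -> 0 < b -> 0 < d ->
  cm < 0 -> (forall y, y < 0 -> Qpoly a b d y = 0 -> y = cm) -> cm < c -> c < 0 ->
  0 < Qpoly a b d c.
Proof.
  intros a b c d cm ha hb hd hcm hu h1 h2.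
  assert (hQ0 : 0 < Qpoly a b d 0).
  { unfold Qpoly. assert (0 < 27 * a ^ 2 * d ^ 2) by (repeat apply Rmult_lt_0_compat; try apply pow_lt; lra).
    assert (0 < 4 * d * b ^ 3) by (repeat apply Rmult_lt_0_compat; try apply pow_lt; lra). lra. }
  destruct (Rlt_dec 0 (Qpoly a b d c)) as [|hn]; auto. exfalso.
  destruct (Req_dec (Qpoly a b d c) 0) as [E|E]. { pose proof (hu c h2 E). lra. }
  destruct (IVT_interv (Qpoly a b d) c 0) as [y [hy1 hy2]].
  - intros. unfold Qpoly. reg.
  - lra.
  - lra.
  - lra.
  - assert (y <> 0) by (intro; subst; lra). pose proof (hu y ltac:(lra) hy2). lra.
Qed.

Theorem theorem6 (a b c d cm tbar : R) :
  0 < a -> 0 < b -> 0 < d ->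
  (* c_- is the unique negative zero of Q *)
  cm < 0 -> Qpoly a b d cm = 0 ->
  (forall y, y < 0 -> Qpoly a b d y = 0 -> y = cm) ->
  (* c in (c_-, c^* ) with c^* = - sqrt (3 b d) *)
  cm < c -> c < - sqrt (3 * b * d) ->
  (* unique equilibrium tbar, with tbar < x_m *)
  is_equilibrium (phi a b c d) tbar ->
  (forall t, is_equilibrium (phi a b c d) t -> t = tbar) ->
  tbar < x_m b c d ->
  let f := phi a b c d in
  let xm := x_m b c d in
  let xM := x_M b c d in
  let c1 := - (2 * sqrt (b * d)) in
  let eta := - d * xm / (c * xm + 2 * d) in
  let inI := fun x => f xm <= x <= iter 2 f xm in
  (* (a) *)
  ((c <= c1 \/ (c1 < c /\ iter 2 f xm <= eta)) ->
     (forall x, inI x -> inI (f x))) /\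
  (c <= c1 ->
     forall t : nat -> R, positive_solution f t ->
       exists N : nat, forall n : nat, (N <= n)%nat -> inI (t n)) /\
  (* (b) *)
  ((forall p q, ~ is_2cycle f p q) ->
     forall t : nat -> R, positive_solution f t -> Un_cv t tbar) /\
  (* (c) *)
  (forall p q,
     is_2cycle f p q ->
     (forall p' q', is_2cycle f p' q' -> (p' = p /\ q' = q) \/ (p' = q /\ q' = p)) ->
     p < tbar -> tbar < q -> q <= xm ->
     (tbar < - d * xM / (c * xM + 2 * d) ->
        forall t, in_preimage_set f tbar t <-> t = tbar) /\
     (forall t : nat -> R, positive_solution f t ->
        (~ in_preimage_set f tbar (t O) -> converges_to_2cycle t p q) /\
        (in_preimage_set f tbar (t O) -> Un_cv t tbar))).
Proof.
  intros ha hb hd hcm hQcm hcmu hcmc hcs [htb hfix] huq htm f xm xM c1 eta inI.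
  assert (hs3 : 0 <= sqrt (3 * b * d)) by apply sqrt_pos.
  assert (hs3' : sqrt (3 * b * d) * sqrt (3 * b * d) = 3 * b * d)
    by (apply sqrt_sqrt; repeat apply Rmult_le_pos; lra).
  assert (hc0 : c < 0) by lra.
  assert (hc3 : 3 * b * d < c ^ 2) by nra.
  assert (hQ : 0 < Qpoly a b d c) by (apply (Q_pos a b c d cm); auto).
  assert (huniq : forall t, 0 < t -> phi a b c d t = t -> t = tbar).
  { intros t h1 h2. apply huq. split; auto. }
  assert (hs4 : 0 <= sqrt (b * d)) by apply sqrt_pos.
  assert (hs4' : sqrt (b * d) * sqrt (b * d) = b * d)
    by (apply sqrt_sqrt; repeat apply Rmult_le_pos; lra).
  assert (hiter : iter 2 f xm = f (f xm)) by reflexivity.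
  unfold inI. rewrite hiter. subst f xm xM c1 eta inI.
  split; [|split; [|split]].
  - intros H x hx. apply (partA1 a b c d ha hb hd hc0 hc3 hQ tbar htb hfix huniq htm); auto.
    intros y hy1 hy2. destruct H as [H|[H1 H2]].
    + apply (f_ge_m0_c1 a b c d hb hd hc0 hc3 tbar htb htm); auto. nra.
    + apply (f_ge_m0_eta a b c d hb hd hc0 hc3 tbar htb htm); auto. nra. lra.
  - intros H t ht. apply (partA2 a b c d ha hb hd hc0 hc3 hQ tbar htb hfix huniq htm); auto. nra.
  - apply (partB a b c d ha hb hd hc0 hc3 hQ tbar htb hfix huniq htm).
  - intros p q hcyc hcu hpt htq hqm. split.
    + intros hz. apply (partC1 a b c d ha hb hd hc0 hc3 hQ tbar htb hfix htm hz).
    + apply (partC2 a b c d ha hb hd hc0 hc3 hQ tbar htb hfix huniq htm p q hcyc hcu hpt htq hqm).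
      apply (Schwarz a b c d ha hb hd hc0 hc3 hQ tbar hfix huniq p q hcyc hcu hpt htq hqm).
Qed.
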